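(* Let $S$ be a nonempty set of graphs on $\Pi$. Then for every integer $i$ with $1\le i<\mathrm{eqdom}(S)$, $(i+(n-\mathrm{cov}_i(S)))$-set agreement is solvable in one round on the closed-above model generated by $S$.
   Context: Fix a set of $n$ processes $\Pi=\{p_1,\dots,p_n\}$. A graph is a directed graph with vertex set $\Pi$; every graph is assumed to contain all self-loops $(p,p)$. For a graph $G$ and $p\in\Pi$, $Out_G(p)=\{q:(p,q)\in E(G)\}$ and $In_G(p)=\{q:(q,p)\in E(G)\}$; for $P\subseteq\Pi$, $Out_G(P)=\bigcup_{p\in P}Out_G(p)$. Computation proceeds in failure-free, communication-closed rounds: in each round $r$ a graph $G_r$ is chosen and each process $p$ receives in round $r$ exactly the round-$r$ messages of the processes in $In_{G_r}(p)$. A communication model is a set of infinite sequences of graphs; an execution is allowed iff its sequence of round graphs belongs to the model. For a graph $G$, $\uparrow G=\{H: E(H)\supseteq E(G)\}$. The closed-above model generated by a set $S$ of graphs is $(\bigcup_{G\in S}\uparrow G)^\omega$. In $k$-set agreement each process starts with an input from a totally ordered set $V_{in}$ and must decide a value so that every decided value is the input of some process and at most $k$ distinct values are decided; it is solvable in $r$ rounds on a model if some algorithm guarantees this, with all processes deciding after $r$ rounds, in every allowed execution and for every input assignment. For a graph $G$, $\mathrm{eqdom}(G)=\min\{i\in[1,n]: \forall P\subseteq\Pi,\ |P|=i\Rightarrow Out_G(P)=\Pi\}$, and $\mathrm{eqdom}(S)=\max_{G\in S}\mathrm{eqdom}(G)$. For a graph $G$ and $i\in[1,n]$, the $i$-th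 covering number is $\mathrm{cov}_i(G)=\min_{P\subseteq\Pi,|P|=i}|Out_G(P)|$, and $\mathrm{cov}_i(S)=\min_{G\in S}\mathrm{cov}_i(G)$. *)

(* Defs.v *)
From mathcomp Require Import all_boot all_order.
Set Implicit Arguments. Unset Strict Implicit. Unset Printing Implicit Defensive.

(* Processes are 'I_n. A graph is its edge set; (p,q) \in G means an edge p -> q. *)
Definition graph (n : nat) := {set 'I_n * 'I_n}.

Definition has_loops n (G : graph n) : Prop := forall p : 'I_n, (p, p) \in G.

Definition Out n (G : graph n) (P : {set 'I_n}) : {set 'I_n} :=
  [set q | [exists p in P, (p, q) \in G]].

Definition In n (G : graph n) (p : 'I_n) : {set 'I_n} := [set q | (q, p) \in G].

Definition eqdom n (G : graph n) : nat :=
  \big[minn/n]_(i < n.+1 | (0 < i) &&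
      [forall P : {set 'I_n}, (#|P| == i) ==> (Out G P == [set: 'I_n])]) i.

Definition eqdom_set n (S : {set graph n}) : nat := \max_(G in S) eqdom G.

Definition cov n (i : nat) (G : graph n) : nat :=
  \big[minn/n]_(P : {set 'I_n} | #|P| == i) #|Out G P|.

Definition cov_set n (i : nat) (S : {set graph n}) : nat :=
  \big[minn/n]_(G in S) cov i G.

Definition closed_above_model n (S : {set graph n}) (gs : nat -> graph n) : Prop :=
  forall r : nat, exists2 G, G \in S & G \subset gs r.

(* A general deterministic round-based algorithm (arbitrary local states and
   messages).  Round r+1 uses the graph gs r. *)
Record algo (n : nat) (V : Type) := Algo {
  a_state : Type;
  a_msg : Type;
  a_init : 'I_n -> V -> a_state;
  a_send : nat -> 'I_n -> a_state -> a_msg;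
  a_trans : nat -> 'I_n -> a_state -> ('I_n -> option a_msg) -> a_state;
  a_dec : 'I_n -> a_state -> V }.

Fixpoint run n V (A : algo n V) (gs : nat -> graph n) (x : 'I_n -> V) (r : nat)
  : 'I_n -> a_state A :=
  match r with
  | 0 => fun p => @a_init n V A p (x p)
  | r'.+1 =>
      let s := @run n V A gs x r' in
      fun p => @a_trans n V A r' p (s p)
        (fun q => if q \in In (gs r') p then Some (@a_send n V A r' q (s q)) else None)
  end.

Definition k_set_agreement_ok n (V : eqType) (k : nat) (x d : 'I_n -> V) : Prop :=
  (forall p, exists q, d p = x q) /\ size (undup [seq d p | p <- enum 'I_n]) <= k.

Definition solvable_in n (V : eqType) (model : (nat -> graph n) -> Prop)
  (k r : nat) : Prop :=
  exists A : algo n V, forall gs, model gs -> forall x : 'I_n -> V,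
    k_set_agreement_ok k x (fun p => @a_dec n V A p (run A gs x r p)).

(* Main.v *)
Require Import Defs.
From mathcomp Require Import all_boot all_order.
From mathcomp Require Import zify.
Import Order.TTheory.

Section Helpers.
Variables (d : Order.disp_t) (V : orderType d) (n : nat).

Definition dec (s : V) (f : 'I_n -> option V) : V :=
  foldr (fun q acc => match f q with Some v => Order.min v acc | None => acc end) s (enum 'I_n).

Lemma decfold_valid (s : V) f (r : seq 'I_n) :
  let res := foldr (fun q acc => match f q with Some v => Order.min v acc | None => acc end) s r in
  res = s \/ exists q, f q = Some res.
Proof.
elim: r => [|a r IH] /=; first by left.
case E: (f a) => [v|] //.
rewrite /Order.min; case: ifP => _; [by right; exists a | exact IH].
Qed.

Lemma decfold_le (s : V) f (r : seq 'I_n) q v :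
  q \in r -> f q = Some v ->
  (foldr (fun q acc => match f q with Some v => Order.min v acc | None => acc end) s r <= v)%O.
Proof.
elim: r => [|a r IH] //=; rewrite inE => /orP[/eqP <-|/IH H] Hf.
  by rewrite Hf ge_min lexx.
case: (f a) => [w|]; last exact: H Hf.
by rewrite ge_min (H Hf) orbT.
Qed.

End Helpers.

Lemma bigmin_le (I : eqType) (r : seq I) (P : pred I) (F : I -> nat) m j :
  j \in r -> P j -> \big[minn/m]_(k <- r | P k) F k <= F j.
Proof.
elim: r => [|a r IH] //; rewrite inE big_cons => /orP[/eqP <-|/IH H] Hp.
  by rewrite Hp geq_minl.
case: (P a); last exact: H.
by rewrite geq_min (H Hp) orbT.
Qed.

Lemma bigmin_len (I : eqType) (r : seq I) (P : pred I) (F : I -> nat) m :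
  \big[minn/m]_(k <- r | P k) F k <= m.
Proof.
elim: r => [|a r IH]; rewrite ?big_nil ?big_cons //.
by case: (P a) => //; rewrite geq_min IH orbT.
Qed.

Theorem theorem3 (n : nat) (d : Order.disp_t) (V : orderType d)
  (S : {set graph n}) :
  S != set0 ->
  (forall G, G \in S -> has_loops G) ->
  forall i : nat, 1 <= i < eqdom_set S ->
  solvable_in V (closed_above_model S) (i + (n - cov_set i S)) 1.
Proof.
move=> _ _ i /andP[_ hi].
have hin : i <= n.
  apply: ltnW; apply: (leq_trans hi).
  apply/bigmax_leqP => G _; exact: bigmin_len.
exists (@Algo n V V V (fun _ v => v) (fun _ _ s => s) (fun _ _ s f => @dec d V n s f) (fun _ s => s)).
move=> gs /(_ 0) [G GS sub] x /=.
set dd := fun p => dec d V n _ _.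
have valid : forall p, exists q, dd p = x q.
  move=> p; rewrite /dd /dec.
  case: (@decfold_valid d V n (x p) (fun q => if q \in In (gs 0) p then Some (x q) else None) (enum 'I_n)) => [->|[q]].
    by exists p.
  by case: ifP => // _ [<-]; exists q.
split=> //.
pose leT := fun p q : 'I_n => (x p <= x q)%O.
pose s := sort leT (enum 'I_n).
have leT_tot : total leT by move=> a b; exact: le_total.
have leT_tr : transitive leT by move=> a b c; exact: le_trans.
have ssort : sorted leT s by exact: sort_sorted.
have suniq : uniq s by rewrite sort_uniq enum_uniq.
have ssize : size s = n by rewrite size_sort size_enum_ord.
pose P := [set p in take i s].
have cardP : #|P| = i.
  rewrite cardsE (card_uniqP _); last by rewrite take_uniq.
  by rewrite size_take ssize; case: ltngtP hin.
have Pmin : forall p q, p \in P -> q \notin P -> (x p <= x q)%O.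
  move=> p q; rewrite !inE => Hp Hq.
  have Hq' : q \in drop i s.
    have : q \in s by rewrite mem_sort mem_enum.
    by rewrite -{1}(cat_take_drop i s) mem_cat (negbTE Hq).
  move: ssort; rewrite (sorted_pairwise leT_tr) -{1}(cat_take_drop i s) pairwise_cat.
  by case/and3P => /allrelP H _ _; exact: H.
pose O := Out (gs 0) P.
have covO : cov_set i S <= #|O|.
  have h1 : \big[minn/n]_(G0 in S) cov i G0 <= cov i G.
    by apply: bigmin_le; [exact: mem_index_enum | exact: GS].
  have h2 : cov i G <= #|Out G P|.
    by apply: bigmin_le; [exact: mem_index_enum | rewrite cardP].
  apply: leq_trans h1 (leq_trans h2 _).
  apply: subset_leq_card; apply/subsetP => q; rewrite !inE => /existsP[p /andP[pP e]].
  by apply/existsP; exists p; rewrite pP (subsetP sub _ e).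
pose L := [seq x p | p <- enum P] ++ [seq dd p | p <- enum (~: O)].
have sizeL : size L = i + (n - #|O|).
  have hc := cardsC O; rewrite card_ord in hc.
  rewrite size_cat !size_map -!cardE cardP.
  by have := addKn #|O| #|~: O|; rewrite hc => ->.
apply: (leq_trans _ (leq_trans (eq_leq sizeL) _)); last first.
  by rewrite leq_add2l leq_sub2l.
apply: uniq_leq_size; first exact: undup_uniq.
move=> v; rewrite mem_undup => /mapP[p _ ->].
rewrite mem_cat; case pO: (p \in O); last first.
  by apply/orP; right; apply/mapP; exists p; rewrite // mem_enum inE pO.
apply/orP; left.
move: pO; rewrite inE => /existsP[q /andP[qP e]].
have le1 : (dd p <= x q)%O.
  apply: (@decfold_le d V n _ _ _ q (x q) (mem_enum _ q)).
  by rewrite inE e.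
case: (valid p) => r Er.
case rP: (r \in P).
  by rewrite Er; apply/mapP; exists r; rewrite ?mem_enum.
have le2 := Pmin q r qP (negbT rP).
apply/mapP; exists q; first by rewrite mem_enum.
by apply/eqP; rewrite eq_le le1 Er le2.
Qed.
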